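(* Let $G=(V,E)$ be any finite connected graph. Then for all $n \ge 2$ there exists a 1-resilient asynchronous algorithm for $n$ processes communicating through single-writer atomic snapshot objects (equivalently, read/write registers) that solves graphical approximate agreement on $G$.
   Context: Graphical approximate agreement on $G$ (known to all processes): each process $p_i$ receives an input vertex $x_i\in V$ and each non-crashed process outputs $y_i\in V$ such that any two outputs are equal or adjacent in $G$ and every output lies on a shortest path in $G$ between two (not necessarily distinct) inputs. An algorithm is 1-resilient if, in every execution in which at most one process crashes, every non-crashed process eventually outputs and the outputs satisfy the specification. *)

(* Defs.v *)
From mathcomp Require Import all_boot.
Unset Printing Implicit Defensive.

(* A graph on a finite vertex type V is a symmetric irreflexive relation e. *)

(* p is (the list of vertices after x of) a path in G from x to y. *)
Definition path_between {V : eqType} (e : rel V) (x y : V) (p : seq V) : bool :=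
  path e x p && (last x p == y).

Definition shortest_path {V : eqType} (e : rel V) (x y : V) (p : seq V) : Prop :=
  path_between e x y p /\ forall q, path_between e x y q -> size p <= size q.

Definition on_shortest_path {V : eqType} (e : rel V) (x y z : V) : Prop :=
  exists p, shortest_path e x y p /\ z \in x :: p.

(* A local step of a process: update its own snapshot component with a value
   and move to a new state; take an atomic snapshot of the whole memory
   (None = component never written) and move to a state depending on it;
   or output (decide) a vertex, after which it takes no further effect. *)
Inductive action (n : nat) (S Val V : Type) : Type :=
| AUpdate of Val & S
| ASnap of (('I_n -> option Val) -> S)
| ADecide of V.

Record algorithm (n : nat) (V : Type) := Algorithm {
  st : Type;
  rv : Type;                          (* values stored in snapshot components *)
  init : 'I_n -> V -> st;
  act : st -> action n st rv V
}.
Arguments st {n V}. Arguments rv {n V}. Arguments init {n V}. Arguments act {n V}.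
Arguments AUpdate {n S Val V}. Arguments ASnap {n S Val V}. Arguments ADecide {n S Val V}.

Definition upd {n : nat} {T : Type} (f : 'I_n -> T) (i : 'I_n) (x : T) : 'I_n -> T :=
  fun j => if j == i then x else f j.

Definition config {n : nat} {V : Type} (A : algorithm n V) : Type :=
  (('I_n -> st A) * ('I_n -> option (rv A)))%type.

Definition step {n : nat} {V : Type} (A : algorithm n V) (i : 'I_n)
  (c : config A) : config A :=
  let: (ls, mem) := c in
  match @act n V A (ls i) with
  | AUpdate v s => (upd ls i s, upd mem i (Some v))
  | ASnap k => (upd ls i (k mem), mem)
  | ADecide _ => (ls, mem)
  end.

Fixpoint run {n : nat} {V : Type} (A : algorithm n V) (x : 'I_n -> V)
  (sch : nat -> 'I_n) (t : nat) : config A :=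
  match t with
  | 0 => (fun i => @init n V A i (x i), fun _ => None)
  | t'.+1 => step A (sch t') (@run n V A x sch t')
  end.

Definition output {n : nat} {V : Type} (A : algorithm n V) (s : st A) : option V :=
  match @act n V A s with ADecide y => Some y | _ => None end.

(* Process i takes infinitely many steps (i.e. does not crash). *)
Definition inf_often {n : nat} (sch : nat -> 'I_n) (i : 'I_n) : Prop :=
  forall N, exists t, N <= t /\ sch t = i.

Definition at_most_one_crash {n : nat} (sch : nat -> 'I_n) : Prop :=
  forall i j : 'I_n, i != j -> inf_often sch i \/ inf_often sch j.

Definition solves_GAA_1resilient {V : finType} (e : rel V) {n : nat}
  (A : algorithm n V) : Prop :=
  forall (x : 'I_n -> V) (sch : nat -> 'I_n), at_most_one_crash sch ->
    (forall i, inf_often sch i ->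
       exists t y, output A ((run A x sch t).1 i) = Some y) /\
    (forall t1 t2 i j y1 y2,
       output A ((run A x sch t1).1 i) = Some y1 ->
       output A ((run A x sch t2).1 j) = Some y2 ->
       y1 = y2 \/ e y1 y2) /\
    (forall t i y, output A ((run A x sch t).1 i) = Some y ->
       exists j k, on_shortest_path e (x j) (x k) y).

(* Main.v *)
Require Import Defs.
From mathcomp Require Import all_boot zify.
From Stdlib Require Import IndefiniteDescription.
Set Implicit Arguments. Unset Strict Implicit. Unset Printing Implicit Defensive.

Lemma stepE n W (A : algorithm n W) j (c : config A) j' :
  (step A j c).1 j' = (if j' == j then match act A (c.1 j) with
                       | AUpdate _ s => s | ASnap k => k c.2 | ADecide _ => c.1 j end
                      else c.1 j')
  /\ (step A j c).2 j' = (if j' == j then match act A (c.1 j) with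
                       | AUpdate v _ => Some v | _ => c.2 j end else c.2 j').
Proof.
case: c => ls mem /=; rewrite /step.
case: (act A (ls j)) => [v s|k|y] /=; rewrite /upd; by case: eqP => // ->.
Qed.

Lemma dec_stable n W (A : algorithm n W) x sch t i y :
  act A ((run A x sch t).1 i) = ADecide y ->
  forall k, (run A x sch (k + t)).1 i = (run A x sch t).1 i.
Proof.
move=> Hy; elim=> [//|k IH]; rewrite addSn /=.
have [-> _] := stepE (sch (k + t)) (run A x sch (k + t)) i.
case: eqP => [Hi|//]; rewrite -Hi IH Hy //.
Qed.

Section Graph.
Variables (V : finType) (e : rel V) (sp : V -> V -> seq V).
Hypothesis Hsp : forall a b, shortest_path e a b (sp a b).

Definition dist a b := size (sp a b).
Definition pp a b k := nth a (a :: sp a b) k.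

Lemma pp_valid a b k : k <= dist a b -> on_shortest_path e a b (pp a b k).
Proof.
move=> Hk; exists (sp a b); split; first exact: Hsp.
by rewrite /pp mem_nth //= ltnS.
Qed.

Lemma pp0 a b : pp a b 0 = a. Proof. by []. Qed.

Lemma ppD a b : pp a b (dist a b) = b.
Proof.
rewrite /pp /dist; have [/andP [_ /eqP H] _] := Hsp a b.
have E := nth_last a (a :: sp a b); rewrite /= in E; rewrite E; exact: H.
Qed.

Lemma pp_adj a b k : k < dist a b -> e (pp a b k) (pp a b k.+1).
Proof.
move=> Hk; have [/andP [Hp _] _] := Hsp a b.
by move/(pathP a): Hp => /(_ k Hk).
Qed.

Lemma pp_close a b k l : k <= l <= k.+1 -> l <= dist a b ->
  pp a b k = pp a b l \/ e (pp a b k) (pp a b l).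
Proof.
case/andP=> H1 H2 H3; case: (ltngtP k l) => H.
- have -> : l = k.+1 by apply/eqP; rewrite eqn_leq H2 H.
  right; apply: pp_adj; lia.
- lia.
- by left; rewrite H.
Qed.
End Graph.

Section Alg.
Variables (V : finType) (e : rel V) (sp : V -> V -> seq V).
Hypothesis Hsp : forall a b, shortest_path e a b (sp a b).
Variable m : nat.

Inductive phase := PhW | PhS | PhD of V & bool | PhDn of V & bool | PhF.
Inductive reg := Pos of V & nat | Dec of V.
Record pst := PSt { role : bool; inp : V; loc : nat; ph : phase }.
Definition setph s p := PSt (role s) (inp s) (loc s) p.

Lemma lt1m : 1 < m.+2. Proof. by []. Qed.
Definition p0 : 'I_m.+2 := ord0.
Definition p1 : 'I_m.+2 := Ordinal lt1m.
Definition othr (r : bool) := if r then p0 else p1.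

Notation dst := (dist sp).
Notation ppt := (pp sp).

Definition nxt (s : pst) (o : option reg) : pst :=
  match o with
  | None => setph s (PhD (inp s) false)
  | Some (Dec y) => setph s (PhD y true)
  | Some (Pos x' l') =>
      let a0 := if role s then x' else inp s in
      let b0 := if role s then inp s else x' in
      if dst a0 b0 <= loc s + l' + 1 then
        setph s (PhD (ppt a0 b0 (if role s then dst a0 b0 - loc s else loc s)) false)
      else PSt (role s) (inp s) (loc s).+1 PhW
  end.

Definition fnx (o0 o1 : option reg) : phase :=
  match o0, o1 with
  | Some (Dec y), _ => PhDn y false
  | _, Some (Dec y) => PhDn y false
  | _, _ => PhF
  end.

Definition actf (s : pst) : action m.+2 pst reg V :=
  match ph s with
  | PhW => AUpdate (Pos (inp s) (loc s)) (setph s PhS)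
  | PhS => ASnap (fun mem => nxt s (mem (othr (role s))))
  | PhD y c => AUpdate (Dec y) (setph s (PhDn y c))
  | PhDn y _ => ADecide y
  | PhF => ASnap (fun mem => setph s (fnx (mem p0) (mem p1)))
  end.

Definition initf (i : 'I_m.+2) (xi : V) : pst :=
  if i == p0 then PSt false xi 0 PhW
  else if i == p1 then PSt true xi 0 PhW else PSt false xi 0 PhF.

Definition Alg : algorithm m.+2 V := @Algorithm m.+2 V pst reg initf actf.

Definition nst (s : pst) (w' : option reg) : pst :=
  match ph s with
  | PhW => setph s PhS
  | PhS => nxt s w'
  | PhD y c => setph s (PhDn y c)
  | _ => s
  end.
Definition nw (s : pst) (w : option reg) : option reg :=
  match ph s with
  | PhW => Some (Pos (inp s) (loc s))
  | PhD y _ => Some (Dec y)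
  | _ => w
  end.

Section Inv.
Variables (a b : V).
Notation D := (dst a b).
Definition xs (r : bool) := if r then b else a.
Definition posv (r : bool) l := if r then D - l else l.
Definition regOK s w := match ph s with
 | PhW => (loc s = 0 /\ w = None) \/ (0 < loc s /\ w = Some (Pos (inp s) (loc s).-1))
 | PhS => w = Some (Pos (inp s) (loc s))
 | PhD _ _ => w = Some (Pos (inp s) (loc s))
 | PhDn y _ => w = Some (Dec y)
 | PhF => False end.
Definition decv p := match p with PhD y c | PhDn y c => Some (y, c) | _ => None end.

Definition Pinv r s w s' (w' : option reg) :=
 [/\ role s = r /\ inp s = xs r, regOK s w, (w' = None -> loc s = 0),
     (forall y, decv (ph s) = Some (y, false) -> y = ppt a b (posv r (loc s))) &
     (forall y, decv (ph s) = Some (y, true) -> ph s' = PhDn y false)].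
Definition SymI s s' := loc s + loc s' <= D /\
  (forall y y', decv (ph s) = Some (y, false) -> decv (ph s') = Some (y', false) ->
     D <= loc s + loc s' + 1).
Definition TwoI r s w s' w' := [/\ Pinv r s w s' w', Pinv (~~r) s' w' s w & SymI s s'].

Lemma TwoI_swap r s w s' w' : TwoI r s w s' w' -> TwoI (~~r) s' w' s w.
Proof.
case=> H1 H2 [H3 H4]; split; rewrite ?negbK //; split; first by rewrite addnC.
by move=> y y' Hy Hy'; rewrite (addnC (loc s')); apply: H4 Hy' Hy.
Qed.

Lemma TwoI_step r s w s' w' : TwoI r s w s' w' -> TwoI r (nst s w') (nw s w) s' w'.
Proof.
case=> [[[Hr Hx] Hreg H0 Hnc Hc] [[Hr' Hx'] Hreg' H0' Hnc' Hc'] [Hsum Hlb]].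
case: s Hr Hx Hreg H0 Hnc Hc Hc' H0' Hsum Hlb => r0 x0 l ph0 /= -> -> {r0 x0}.
case: ph0 => [||y c|y c|] //= Hreg H0 Hnc Hc Hc' H0' Hsum Hlb.
-
  split; split => //=; by move=> y /Hc'.
-
  case: w' Hreg' H0' Hnc' Hc' H0 Hlb => [[x' l'|y]|] Hreg' H0' Hnc' Hc' H0 Hlb.
  + have [Ex Hl1 Hl2 Hnd] : [/\ x' = xs (~~r), l' <= loc s', loc s' <= l'.+1 &
          forall y c, ph s' <> PhDn y c].
    { move: Hreg'; rewrite /regOK; case: (ph s') => [||y c|y c|] //.
      - case=> [[_ //]|[Hp [-> ->]]]; split => //; lia.
      - case=> -> ->; split => //.
      - case=> -> ->; split => //. }
    subst x'; rewrite /nst /nw /nxt /=.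
    have -> : (if r then xs (~~r) else xs r) = a by case: (r).
    have -> : (if r then xs r else xs (~~r)) = b by case: (r).
    case: ifP => Hd.
    * split; split => //=.
      -- by move=> y [<-]; case: (r).
      -- by move=> y /Hc'.
      -- by move=> y y' _ _; lia.
    * split; split => //=.
      -- by right; split.
      -- by move=> y /Hc'.
      -- lia.
  + have [c' Hs'] : exists c', ph s' = PhDn y c'.
    { move: Hreg'; rewrite /regOK; case: (ph s') => [||y0 c|y0 c|] //.
      - by case=> [[_ //]|[_ //]].
      - by case=> <-; exists c. }
    have Hc'0 : c' = false.
    { case: c' Hs' => // Hs'; by move: (Hc' y); rewrite Hs' => /(_ erefl). }
    subst c'.
    split; split => //=.
    -- by move=> y' [<-].
    -- by move=> y' /Hc'.
  + have Hl0 : l = 0 by apply: H0.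
    have Hs'W : ph s' = PhW.
    { move: Hreg'; rewrite /regOK; by case: (ph s'). }
    subst l.
    split; split => //=.
    -- move=> y [<-]; case: (r) => /=; first by rewrite subn0 (ppD Hsp).
       by [].
    -- by move=> y /Hc'.
    -- by move=> y y' _; rewrite Hs'W.
-
  split; split => //=; by move=> y' /Hc'.
Qed.
End Inv.

Lemma actE s (mem : 'I_m.+2 -> option reg) w : ph s <> PhF ->
  (match actf s with AUpdate _ s2 => s2 | ASnap k => k mem | ADecide _ => s end)
    = nst s (mem (othr (role s))) /\
  (match actf s with AUpdate v _ => Some v | _ => w end) = nw s w.
Proof. by case: s => r x l []. Qed.

Lemma p10 : (p1 == p0) = false. Proof. by []. Qed.

Section Run.
Variable x : 'I_m.+2 -> V.
Notation a := (x p0).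
Notation b := (x p1).

Definition FolI (ls : 'I_m.+2 -> pst) (i : 'I_m.+2) :=
  ph (ls i) = PhF \/ exists y c, ph (ls i) = PhDn y c /\
    ((exists c0, ph (ls p0) = PhDn y c0) \/ (exists c1, ph (ls p1) = PhDn y c1)).

Definition GInv (c : config Alg) :=
  TwoI a b false (c.1 p0) (c.2 p0) (c.1 p1) (c.2 p1) /\
  forall i, i != p0 -> i != p1 -> FolI c.1 i.

Lemma GInv_init sch : GInv (run Alg x sch 0).
Proof.
split => /=.
- rewrite /initf eqxx p10 eqxx.
  split; split => //=; first by left.
  by left.
- move=> i /negPf H0 /negPf H1; rewrite /FolI /initf H0 H1; by left.
Qed.

Lemma PhDn_nst s w y c : ph s = PhDn y c -> nst s w = s.
Proof. by rewrite /nst => ->. Qed.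

Lemma GInv_step c j : GInv c -> GInv (step Alg j c).
Proof.
case: c => ls mem [HT HF].
have S i := stepE j (ls, mem) i.
have HPh0 : ph (ls p0) <> PhF by case: HT => [[_ Hr _ _ _] _ _]; move: Hr; rewrite /regOK => /[swap] ->.
have HPh1 : ph (ls p1) <> PhF by case: HT => [_ [_ Hr _ _ _] _]; move: Hr; rewrite /regOK => /[swap] ->.
have [Hr0 Hr1] : role (ls p0) = false /\ role (ls p1) = true.
  by case: HT => [[[-> _] _ _ _ _] [[-> _] _ _ _ _] _].
have Hpers : forall k y c0, ph (ls k) = PhDn y c0 -> ph ((step Alg j (ls, mem)).1 k) = PhDn y c0.
{ move=> k y c0 Hk; case: (S k) => -> _.
  case: (k =P j) => [Hkj|//]; subst k; by rewrite /= /actf Hk. }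
rewrite /GInv.
move: (step Alg j (ls, mem)) S Hpers => c' S Hpers.
have [Hj | Hj0] := eqVneq j p0.
- subst j.
  case: (S p0) => -> ->; rewrite eqxx.
  case: (S p1) => -> ->; rewrite p10.
  case: (actE mem (mem p0) HPh0) => -> ->; rewrite Hr0 /=.
  split; first exact: TwoI_step.
  move=> i Hi0 Hi1; rewrite /FolI; case: (S i) => -> _; rewrite (negPf Hi0).
  case: (HF i Hi0 Hi1) => [H|[y [c0 [H1 H2]]]]; first by left.
  right; exists y, c0; split => //.
  case: H2 => [[c1 H2]|[c1 H2]]; last first.
  by right; exists c1; case: (S p1) => -> _; rewrite p10.
  by left; exists c1; exact: (Hpers p0 y c1 H2).
have [Hj | Hj1] := eqVneq j p1.
- subst j.
  case: (S p1) => -> ->; rewrite eqxx.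
  case: (S p0) => -> ->; rewrite eq_sym p10.
  case: (actE mem (mem p1) HPh1) => -> ->; rewrite Hr1 /=.
  split; first by apply: (TwoI_swap (r := true)); apply: TwoI_step; apply: (TwoI_swap HT).
  move=> i Hi0 Hi1; rewrite /FolI; case: (S i) => -> _; rewrite (negPf Hi1).
  case: (HF i Hi0 Hi1) => [H|[y [c0 [H1 H2]]]]; first by left.
  right; exists y, c0; split => //.
  case: H2 => H2; first by (case: H2 => c1 H2; left; exists c1; case: (S p0) => -> _; rewrite eq_sym p10).
  case: H2 => c1 H2; right; exists c1; exact: (Hpers p1 y c1 H2).
- have E0 : c'.1 p0 = ls p0 by case: (S p0) => -> _; rewrite eq_sym (negPf Hj0).
  have E1 : c'.1 p1 = ls p1 by case: (S p1) => -> _; rewrite eq_sym (negPf Hj1).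
  have W0 : c'.2 p0 = mem p0 by case: (S p0) => _ ->; rewrite eq_sym (negPf Hj0).
  have W1 : c'.2 p1 = mem p1 by case: (S p1) => _ ->; rewrite eq_sym (negPf Hj1).
  rewrite E0 E1 W0 W1; split => //.
  move=> i Hi0 Hi1; rewrite /FolI E0 E1; case: (S i) => -> _.
  case: (i =P j) => [Hij|_]; last exact: (HF i Hi0 Hi1).
  subst i.
  case: (HF j Hi0 Hi1) => [H|[y [c0 [H1 H2]]]]; last first.
    by rewrite /= /actf H1; right; exists y, c0.
  rewrite /= /actf H /=.
  have R0 : regOK (ls p0) (mem p0) by case: HT => [[_ R _ _ _] _ _].
  have R1 : regOK (ls p1) (mem p1) by case: HT => [_ [_ R _ _ _] _].
  rewrite /fnx.
  case E: (mem p0) R0 => [[x0 l0|y0]|] R0.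
  + case F: (mem p1) R1 => [[x1 l1|y1]|] R1; try by left.
    right; exists y1, false; split => //; right.
    move: R1; rewrite /regOK; case: (ph (ls p1)) => //.
    * by case=> [[_ //]|[_ //]].
    * by move=> y c [<-]; exists c.
  + right; exists y0, false; split => //; left.
    move: R0; rewrite /regOK; case: (ph (ls p0)) => //.
    * by case=> [[_ //]|[_ //]].
    * by move=> y c [<-]; exists c.
  + case F: (mem p1) R1 => [[x1 l1|y1]|] R1; try by left.
    right; exists y1, false; split => //; right.
    move: R1; rewrite /regOK; case: (ph (ls p1)) => //.
    * by case=> [[_ //]|[_ //]].
    * by move=> y c [<-]; exists c.
Qed.

Notation D := (dist sp a b).
Notation lsr sch t := ((run Alg x sch t).1).
Notation mmr sch t := ((run Alg x sch t).2).

Lemma GInv_run sch t : GInv (run Alg x sch t).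
Proof. elim: t => [|t IH]; [exact: GInv_init | exact: GInv_step]. Qed.

Lemma output_ph s y : output Alg s = Some y -> exists c, ph s = PhDn y c.
Proof. by case: s => r x0 l [||y0 c0|y0 c0|] //= [<-]; exists c0. Qed.

Definition dv (ls : 'I_m.+2 -> pst) y :=
  (exists c0, ph (ls p0) = PhDn y c0) \/ (exists c1, ph (ls p1) = PhDn y c1).

Lemma dv_out c i y : GInv c -> output Alg (c.1 i) = Some y -> dv c.1 y.
Proof.
move=> [HT HF] /output_ph [c0 Hc].
have [Hi0|Hi0] := eqVneq i p0; first by subst; left; exists c0.
have [Hi1|Hi1] := eqVneq i p1; first by subst; right; exists c0.
case: (HF i Hi0 Hi1) => [H|[y' [c' [H1 H2]]]]; first by rewrite H in Hc.
by move: H2; rewrite Hc in H1; case: H1 => ->.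
Qed.

Lemma two_close s0 w0 s1 w1 y0 c0 y1 c1 :
  TwoI a b false s0 w0 s1 w1 -> ph s0 = PhDn y0 c0 -> ph s1 = PhDn y1 c1 ->
  y0 = y1 \/ e y0 y1.
Proof.
case=> [[_ _ _ Hnc0 Hc0] [_ _ _ Hnc1 Hc1] [Hsum Hlb]] H0 H1.
case: c0 H0 => H0.
  by move: (Hc0 y0); rewrite H0 H1 => /(_ erefl) [->]; left.
case: c1 H1 => H1.
  by move: (Hc1 y1); rewrite H0 H1 => /(_ erefl) [->]; left.
have E0 := Hnc0 y0; rewrite H0 in E0; have {E0}-> := E0 erefl.
have E1 := Hnc1 y1; rewrite H1 in E1; have {E1}-> := E1 erefl.
have Hl := Hlb y0 y1; rewrite H0 H1 in Hl; have {}Hl := Hl erefl erefl.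
rewrite /posv /=; apply: pp_close => //; lia.
Qed.

Hypothesis esym : symmetric e.

Lemma dv_close ls mem y y' : GInv (ls, mem) -> dv ls y -> dv ls y' -> y = y' \/ e y y'.
Proof.
case=> [HT _] [[c H]|[c H]] [[c' H']|[c' H']].
- by left; rewrite H in H'; case: H'.
- exact: two_close HT H H'.
- case: (two_close HT H' H) => [->|]; [by left | by rewrite esym; right].
- by left; rewrite H in H'; case: H'.
Qed.

Lemma dv_valid ls mem y : GInv (ls, mem) -> dv ls y -> on_shortest_path e a b y.
Proof.
case=> [[[_ _ _ Hnc0 Hc0] [_ _ _ Hnc1 Hc1] [Hsum _]] _].
rewrite /= in Hsum Hnc0 Hc0 Hnc1 Hc1; case=> [[c H]|[c H]].
- case: c H => H.
    move: (Hc1 y) (Hc0 y); rewrite H => _ /(_ erefl) H1.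
    move: (Hnc1 y); rewrite H1 => /(_ erefl) ->; apply: pp_valid => //; rewrite /posv /=; lia.
  move: (Hnc0 y); rewrite H => /(_ erefl) ->; apply: pp_valid => //; rewrite /posv /=; lia.
- case: c H => H.
    move: (Hc1 y); rewrite H => /(_ erefl) H1.
    move: (Hnc0 y); rewrite H1 => /(_ erefl) ->; apply: pp_valid => //; rewrite /posv /=; lia.
  move: (Hnc1 y); rewrite H => /(_ erefl) ->; apply: pp_valid => //; rewrite /posv /=; lia.
Qed.

Definition mu s := match ph s with
  | PhW => 3 * (D - loc s) + 3 | PhS => 3 * (D - loc s) + 2 | PhD _ _ => 1 | _ => 0 end.

Lemma nxt_cases s o : (exists y c, nxt s o = setph s (PhD y c)) \/
   nxt s o = PSt (role s) (inp s) (loc s).+1 PhW.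
Proof.
case: o => [[x' l'|y]|] /=; try by left; do 2 eexists.
by case: ifP => _; [left; do 2 eexists|right].
Qed.

Lemma mu_gen c j k : (k = p0 \/ k = p1) -> GInv c -> GInv (step Alg j c) ->
  mu ((step Alg j c).1 k) <= mu (c.1 k) /\
  (j = k -> 0 < mu (c.1 k) -> mu ((step Alg j c).1 k) < mu (c.1 k)).
Proof.
move=> Hk [[H0 H1 [Hs _]] _] [[H0' H1' [Hs' _]] _].
have Hloc : loc ((step Alg j c).1 k) <= D by case: Hk => ->; lia.
have Hph : ph (c.1 k) <> PhF.
  by case: Hk => ->; [case: H0 => _ R _ _ _ | case: H1 => _ R _ _ _];
     move: R; rewrite /regOK => /[swap] ->.
move: Hloc; case: (stepE j c k) => -> _.
case: (k =P j) => [Hkj|Hkj]; last by move=> _; split => // Hjk; case: Hkj.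
subst j; case: (actE c.2 (c.2 k) Hph) => -> _.
case: (c.1 k) Hph => r x0 l [||y c0|y c0|] //= _.
- move=> _; rewrite /mu /=; split; [lia | move=> _ _; lia].
- rewrite /nst /=; case: (nxt_cases (PSt r x0 l PhS) (c.2 (othr r))) => [[y [c0 ->]]|->].
    by rewrite /mu /=; split; [lia | move=> _ _; lia].
  by rewrite /mu /= => Hl; split; [lia | move=> _ _; lia].

Qed.

Lemma mu_run sch t k : (k = p0 \/ k = p1) ->
  mu (lsr sch t.+1 k) <= mu (lsr sch t k) /\
  (sch t = k -> 0 < mu (lsr sch t k) -> mu (lsr sch t.+1 k) < mu (lsr sch t k)).
Proof. move=> Hk; exact: (mu_gen Hk (GInv_run sch t) (GInv_run sch t.+1)). Qed.

Lemma mu_mono sch N d k : (k = p0 \/ k = p1) -> mu (lsr sch (d + N) k) <= mu (lsr sch N k).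
Proof.
move=> Hk; elim: d => [//|d IH]; rewrite addSn.
by apply: leq_trans IH; case: (mu_run sch (d + N) Hk).
Qed.

Lemma term01 sch k : (k = p0 \/ k = p1) -> inf_often sch k ->
  exists t y, output Alg (lsr sch t k) = Some y.
Proof.
move=> Hk Hinf.
suff: forall v N, mu (lsr sch N k) <= v -> exists t, mu (lsr sch t k) = 0.
  case/(_ _ 0 (leqnn _)) => t Ht; exists t.
  have [[H0 H1 _] _] := GInv_run sch t.
  have R : regOK (lsr sch t k) (mmr sch t k)
    by case: Hk => ->; [case: H0 => _ R _ _ _ | case: H1 => _ R _ _ _].
  move: Ht R; rewrite /mu /regOK /output /=.
  case: (lsr sch t k) => r x0 l [||y c0|y c0|] //=; try lia.
  by move=> _ _; exists y.
elim=> [|v IH] N HN; first by exists N; lia.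
have [HN0|Hpos] := posnP (mu (lsr sch N k)); first by exists N.
case: (Hinf N) => t [HNt Hst].
have Hmt : mu (lsr sch t k) <= mu (lsr sch N k).
  by rewrite -(subnK HNt); apply: mu_mono.
have [Ht0|Hpos'] := posnP (mu (lsr sch t k)); first by exists t.
apply: (IH t.+1); case: (mu_run sch t Hk) => _ /(_ Hst Hpos'); lia.
Qed.

Lemma fnx_dec o0 o1 y : o0 = Some (Dec y) \/ o1 = Some (Dec y) ->
  exists y' c, fnx o0 o1 = PhDn y' c.
Proof.
case=> ->; first by do 2 eexists.
by case: o0 => [[x' l'|y']|] /=; do 2 eexists.
Qed.

Lemma out_act s y : output Alg s = Some y -> act Alg s = ADecide y.
Proof. by rewrite /output; case: (act Alg s) => // y' [->]. Qed.

Lemma term_all sch : at_most_one_crash sch -> forall i, inf_often sch i ->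
  exists t y, output Alg (lsr sch t i) = Some y.
Proof.
move=> Hc i Hi.
have [Hi0|Hi0] := eqVneq i p0; first by subst; apply: term01 => //; left.
have [Hi1|Hi1] := eqVneq i p1; first by subst; apply: term01 => //; right.
have [k [Hk Hkinf]] : exists k, (k = p0 \/ k = p1) /\ inf_often sch k.
  case: (Hc p0 p1); first by rewrite eq_sym p10.
    by move=> H; exists p0; split => //; left.
  by move=> H; exists p1; split => //; right.
case: (term01 Hk Hkinf) => t0 [y0 Hout].
have Hact := out_act Hout.
case: (Hi t0) => t [Ht Hst].
have Est : lsr sch t k = lsr sch t0 k by rewrite -(subnK Ht) (dec_stable Hact).
have [c0 Hph] := output_ph Hout.
have [[H0 H1 _] HF] := GInv_run sch t.
have Hmem : mmr sch t k = Some (Dec y0).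
  have R : regOK (lsr sch t k) (mmr sch t k)
    by case: Hk => ->; [case: H0 => _ R _ _ _ | case: H1 => _ R _ _ _].
  by move: R; rewrite /regOK Est Hph.
case: (HF i Hi0 Hi1) => [HF'|[y [c [Hy _]]]]; last first.
  by exists t, y; rewrite /output /= /actf Hy.
exists t.+1.
have E : run Alg x sch t.+1 = step Alg (sch t) (run Alg x sch t) by [].
rewrite E; case: (stepE (sch t) (run Alg x sch t) i) => -> _.
rewrite Hst eqxx /= /actf HF' /=.
have [y' [c' ->]] : exists y' c', fnx (mmr sch t p0) (mmr sch t p1) = PhDn y' c'.
  by apply: (@fnx_dec _ _ y0); case: Hk Hmem => ->; [left|right].
by exists y'.
Qed.
End Run.

Hypothesis esym : symmetric e.

Lemma Alg_solves : solves_GAA_1resilient e Alg.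
Proof.
move=> x sch Hc; split; [|split].
- exact: term_all.
- move=> t1 t2 i j y1 y2 H1 H2.

  have P1 : output Alg ((run Alg x sch (maxn t1 t2)).1 i) = Some y1.
    by rewrite -(subnK (leq_maxl t1 t2)) (dec_stable (out_act H1)).
  have P2 : output Alg ((run Alg x sch (maxn t1 t2)).1 j) = Some y2.
    by rewrite -(subnK (leq_maxr t1 t2)) (dec_stable (out_act H2)).
  have G := GInv_run x sch (maxn t1 t2).
  case: (run Alg x sch (maxn t1 t2)) G P1 P2 => ls mem G P1 P2.
  exact: (dv_close esym G (dv_out G P1) (dv_out G P2)).
- move=> t i y H; exists p0, p1.
  have G := GInv_run x sch t.
  case: (run Alg x sch t) G H => ls mem G H.
  exact: (dv_valid G (dv_out G H)).
Qed.
End Alg.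

Unset Implicit Arguments.

Theorem mainTheorem6 :
  forall (V : finType) (e : rel V),
    symmetric e -> irreflexive e -> (forall u v : V, connect e u v) ->
    forall n : nat, 2 <= n ->
      exists A : algorithm n V, solves_GAA_1resilient e A.
Proof.
move=> V e esym _ Hcon [|[|m]] // _.
have Hex : forall a b : V, exists p, shortest_path e a b p.
{ move=> a b.
  pose P k := [exists t : k.-tuple V, path_between e a b t].
  have HP : exists k, P k.
  { case/connectP: (Hcon a b) => p Hp Hl; exists (size p); apply/existsP.
    by exists (in_tuple p); rewrite /path_between /= Hp -Hl eqxx. }
  case: (ex_minnP HP) => k /existsP [t Ht] Hmin.
  exists t; split => // q Hq; rewrite size_tuple; apply: Hmin.
  by apply/existsP; exists (in_tuple q). }
have [sp Hsp] : exists sp : V -> V -> seq V, forall a b, shortest_path e a b (sp a b).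
{ exists (fun a b => proj1_sig (constructive_indefinite_description _ (Hex a b))).
  move=> a b; exact: proj2_sig. }
exists (Alg sp m); exact: Alg_solves.
Qed.
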